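(* The topology on $\underline{\mathcal{X}}$ induced by $d_{\underline{\mathcal{X}}}$ is strictly finer than the subspace topology induced by the product topology on $\mathcal{X}^{\mathbb{Z}_-}$ if and only if $(\mathcal{X},d_{\mathcal{X}})$ is unbounded. In particular, if $\mathcal{X}$ is compact, then so is $\underline{\mathcal{X}}$.
   Context: $\mathbb{Z}_-=\{\dots,-2,-1\}$. $(\mathcal{X},d_{\mathcal{X}})$ is a Polish space with a complete metric. $\mathbf{w}=(w_t)_{t\le-1}\subseteq(0,1)$ is a monotone sequence with $\sum_{t\le-1}w_t=1$ and $\sup_{n\ge1}(\sup_{t\le-1}w_t/w_{t-n})^{1/n}<\infty$. Fix $x_*\in\mathcal{X}$. $\underline{\mathcal{X}}$ is the set of $\mathbf{x}\in\mathcal{X}^{\mathbb{Z}_-}$ with $\sum_{t\le-1}w_td_{\mathcal{X}}(x_t,x_* )<\infty$, equipped with the metric $d_{\underline{\mathcal{X}}}(\mathbf{x}^1,\mathbf{x}^2)=\sum_{t\le-1}w_td_{\mathcal{X}}(x^1_t,x^2_t)$. *)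

(* Defs.v *)
From mathcomp Require Import all_boot all_order all_algebra.
From mathcomp Require Import all_classical all_reals all_analysis.
Import numFieldNormedType.Exports.
Local Open Scope classical_set_scope.
Local Open Scope ring_scope.

Section Defs.
Context {R : realType}.

Definition is_metric {T : Type} (d : T -> T -> R) : Prop :=
  [/\ forall x y, 0 <= d x y,
      forall x y, d x y = 0 <-> x = y,
      forall x y, d x y = d y x &
      forall x y z, d x z <= d x y + d y z].

Definition d_complete {T : Type} (d : T -> T -> R) : Prop :=
  forall u : nat -> T,
    (forall e, 0 < e -> exists N, forall m n, (N <= m)%N -> (N <= n)%N ->
        d (u m) (u n) < e) ->
    exists l, forall e, 0 < e -> exists N, forall n, (N <= n)%N -> d (u n) l < e.

Definition d_separable {T : Type} (d : T -> T -> R) : Prop :=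
  exists D : nat -> T, forall x e, 0 < e -> exists n, d x (D n) < e.

Definition polish {T : Type} (d : T -> T -> R) : Prop :=
  [/\ is_metric d, d_complete d & d_separable d].

Definition unbounded {T : Type} (d : T -> T -> R) : Prop :=
  forall M : R, exists x y, M < d x y.

Definition metric_open {S : Type} (dist : S -> S -> R) (A : set S) : Prop :=
  forall x, A x -> exists e, 0 < e /\ forall y, dist x y < e -> A y.

(* Weights: w k stands for w_{-(k+1)}, k : nat, so t = -(k+1) in Z_-;
   w_{t-n} is then w (k + n). *)
Definition admissible_weights (w : nat -> R) : Prop :=
  [/\ forall k, 0 < w k < 1,
      (forall k, w k.+1 <= w k) \/ (forall k, w k <= w k.+1),
      ((fun n : nat => \sum_(k < n) w k) @ \oo --> (1 : R)) &
      exists C : R, forall n k, (1 <= n)%N ->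
        (w k / w (k + n)%N) `^ (n%:R)^-1 <= C].

Definition in_wspace {T : Type} (w : nat -> R) (d : T -> T -> R) (xs : T)
  (x : nat -> T) : Prop :=
  cvgn (fun n => \sum_(k < n) w k * d (x k) xs).

Definition wspace {T : Type} (w : nat -> R) (d : T -> T -> R) (xs : T) :=
  {x : nat -> T | in_wspace w d xs x}.

Definition wdist {T : Type} (w : nat -> R) (d : T -> T -> R) (xs : T)
  (a b : wspace w d xs) : R :=
  limn (fun n => \sum_(k < n) w k * d (sval a k) (sval b k)).

(* open sets of the product topology on T^{Z_-} (basic cylinder neighbourhoods) *)
Definition prod_open {T : Type} (d : T -> T -> R) (O : set (nat -> T)) : Prop :=
  forall x, O x -> exists N e, 0 < e /\
    forall y, (forall k, (k < N)%N -> d (x k) (y k) < e) -> O y.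

Definition subspace_prod_open {T : Type} (d : T -> T -> R) (P : (nat -> T) -> Prop)
  (A : set {x : nat -> T | P x}) : Prop :=
  exists O, prod_open d O /\ A = (fun a => O (sval a)).

End Defs.

Definition strictly_finer {S : Type} (op1 op2 : set S -> Prop) : Prop :=
  (forall A, op2 A -> op1 A) /\ (exists A, op1 A /\ ~ op2 A).

Definition opencover_compact {S : Type} (op : set S -> Prop) : Prop :=
  forall (I : Type) (F : I -> set S), (forall i, op (F i)) ->
    (forall x, exists i, F i x) ->
    exists (n : nat) (f : 'I_n -> I), forall x, exists j, F (f j) x.

(* Main.v *)
Require Import Defs.
From mathcomp Require Import all_boot all_order all_algebra.
From mathcomp Require Import all_classical all_reals all_analysis.
From mathcomp Require Import ring lra.
Import Order.TTheory GRing.Theory Num.Theory.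
Import numFieldNormedType.Exports.
Local Open Scope classical_set_scope.
Local Open Scope ring_scope.

Section Aux.
Variables (R : realType) (T : Type) (d : T -> T -> R) (w : nat -> R) (xs : T).
Hypothesis d0 : forall x y, 0 <= d x y.
Hypothesis dxx : forall x, d x x = 0.
Hypothesis dsym : forall x y, d x y = d y x.
Hypothesis dtri : forall x y z, d x z <= d x y + d y z.
Hypothesis wpos : forall k, 0 < w k.
Hypothesis wS : (fun n : nat => \sum_(k < n) w k) @ \oo --> (1 : R).

Definition ps (a b : nat -> T) n := \sum_(k < n) w k * d (a k) (b k).
Definition Sw n := \sum_(k < n) w k.

Lemma ps_nd a b : {homo ps a b : n m / (n <= m)%N >-> n <= m}.
Proof.
apply/nondecreasing_seqP => n; rewrite /ps big_ord_recr /= lerDl.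
by rewrite mulr_ge0 // ltW.
Qed.

Lemma Sw_nd : {homo Sw : n m / (n <= m)%N >-> n <= m}.
Proof.
apply/nondecreasing_seqP => n; rewrite /Sw big_ord_recr /= lerDl.
by rewrite ltW.
Qed.

Lemma Sw_le1 n : Sw n <= 1.
Proof.
have H := nondecreasing_cvgn_le Sw_nd (cvgP _ wS) n.
by rewrite (cvg_lim (@Rhausdorff R) wS) in H.
Qed.

Lemma ps_tri a b c n : ps a c n <= ps a b n + ps b c n.
Proof.
rewrite /ps -big_split; apply: ler_sum => k _ /=.
by rewrite -mulrDr ler_wpM2l // ltW.
Qed.

Lemma ps_sym a b : ps a b = ps b a.
Proof. by apply: funext => n; apply: eq_bigr => k _; rewrite dsym. Qed.

Lemma ps_ge0 a b n : 0 <= ps a b n.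
Proof. by apply: sumr_ge0 => k _; rewrite mulr_ge0 // ltW. Qed.

Notation W := (wspace w d xs).
Definition cst : nat -> T := fun _ => xs.

Lemma ps_cvg (a b : W) : cvgn (ps (sval a) (sval b)).
Proof.
apply: nondecreasing_is_cvgn; first exact: ps_nd.
exists (limn (ps (sval a) cst) + limn (ps (sval b) cst)) => _ [n _ <-].
apply: le_trans (ps_tri _ cst _ n) _.
apply: lerD; first exact: nondecreasing_cvgn_le (ps_nd _ _) (svalP a) n.
rewrite ps_sym; exact: nondecreasing_cvgn_le (ps_nd _ _) (svalP b) n.
Qed.

Lemma wdist_ge (a b : W) n : ps (sval a) (sval b) n <= wdist w d xs a b.
Proof. exact: nondecreasing_cvgn_le (ps_nd _ _) (ps_cvg a b) n. Qed.

Lemma wdist_le (a b : W) B : (forall n, ps (sval a) (sval b) n <= B) ->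
  wdist w d xs a b <= B.
Proof. by move=> H; apply: limr_le; [exact: ps_cvg | exact: nearW]. Qed.

Lemma wdist_tri (a b c : W) : wdist w d xs a c <= wdist w d xs a b + wdist w d xs b c.
Proof.
apply: wdist_le => n; apply: le_trans (ps_tri _ (sval b) _ n) _.
by apply: lerD; apply: wdist_ge.
Qed.

Lemma wdist_self (a : W) : wdist w d xs a a = 0.
Proof.
apply/eqP; rewrite eq_le; apply/andP; split.
  apply: wdist_le => n; rewrite /ps big1 // => k _; by rewrite dxx mulr0.
by have := wdist_ge a a 0; rewrite /ps big_ord0.
Qed.


Section Bnd.
Variable M : R.
Hypothesis M0 : 0 <= M.
Hypothesis dM : forall x y, d x y <= M.

Lemma bnd_in (x : nat -> T) : in_wspace w d xs x.
Proof.
apply: nondecreasing_is_cvgn; first exact: ps_nd.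
exists M => _ [n _ <-]; rewrite -[leRHS]mulr1.
apply: le_trans (_ : M * Sw n <= _); last by rewrite ler_wpM2l // Sw_le1.
rewrite /Sw mulr_sumr; apply: ler_sum => k _.
by rewrite mulrC ler_wpM2r // ltW.
Qed.

Lemma cyl_lemma r : 0 < r -> exists N e B, [/\ 0 < e, B < r &
  forall a b : nat -> T, (forall k, (k < N)%N -> d (a k) (b k) < e) ->
    forall n, ps a b n <= B].
Proof.
move=> r0.
pose eps := r / (2 * (M + 1)).
have eps0 : 0 < eps by rewrite divr_gt0 // mulr_gt0 // ltr_wpDl.
have [N _ HN] := (cvgrPdist_lt _ _).1 wS eps eps0.
have HN' := HN N (leqnn N); rewrite /= in HN'.
have S1 := Sw_le1 N; rewrite /Sw in S1.
set SN := \sum_(k < N) w k in HN' S1.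
have HS : 1 - SN < eps by rewrite ger0_norm ?subr_ge0 in HN'.
exists N, (r / 2), (r / 2 + M * (1 - SN)); split.
- by rewrite divr_gt0.
- have : M * (1 - SN) <= (M + 1) * (1 - SN) by rewrite ler_wpM2r ?subr_ge0 // lerDl.
  have : (M + 1) * (1 - SN) < (M + 1) * eps by rewrite ltr_pM2l // ltr_wpDl.
  have -> : (M + 1) * eps = r / 2.
 by rewrite /eps; field; rewrite lt0r_neq0 // ltr_wpDl.
  lra.
move=> a b Hab n.
apply: le_trans (ps_nd a b _ _ (leq_addr N n)) _.
rewrite /ps -(big_mkord (fun _ => true) (fun k => w k * d (a k) (b k))) (big_cat_nat (leq0n N) (leq_addl n N)) /=.
apply: lerD.
  apply: le_trans (_ : \sum_(0 <= k < N) w k * (r / 2) <= _).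
    apply: ler_sum_nat => k /andP [_ kN].
    by rewrite ler_wpM2l ?ltW // Hab.
  rewrite -big_distrl /= big_mkord -/SN -[leRHS]mul1r ler_wpM2r //.
  by rewrite ltW // divr_gt0.
apply: le_trans (_ : \sum_(N <= k < n + N) w k * M <= _).
  by apply: ler_sum_nat => k _; rewrite ler_wpM2l // ltW.
rewrite -mulr_suml mulrC ler_wpM2l //.
have := Sw_le1 (n + N); rewrite /Sw -(big_mkord (fun _ => true)) (big_cat_nat (leq0n N) (leq_addl n N)) /=.
rewrite big_mkord -/SN; lra.
Qed.

End Bnd.


Lemma term_le a b k : w k * d (a k) (b k) <= ps a b k.+1.
Proof. by rewrite /ps big_ord_recr /= lerDr ps_ge0. Qed.

Lemma wmin N : exists m, 0 < m /\ forall k, (k < N)%N -> m <= w k.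
Proof.
elim: N => [|N [m [m0 Hm]]]; first by exists 1.
exists (Num.min m (w N)); split; first by rewrite lt_min m0 wpos.
move=> k; rewrite ltnS leq_eqVlt => /orP [/eqP ->|kN].
  by rewrite ge_min lexx orbT.
by rewrite ge_min Hm.
Qed.

Lemma finer (A : set W) : subspace_prod_open d (in_wspace w d xs) A ->
  metric_open (wdist w d xs) A.
Proof.
move=> [Op [HO ->]] a Opa.
have [N [e [e0 HNe]]] := HO _ Opa.
have [m [m0 Hm]] := wmin N.
exists (e * m); split; first by rewrite mulr_gt0.
move=> b hb; apply: HNe => k kN.
have h1 := le_lt_trans (le_trans (term_le (sval a) (sval b) k) (wdist_ge a b _)) hb.
have h2 : e * m <= e * w k.
  by apply: ler_wpM2l; [exact: ltW | exact: Hm].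
have h3 : w k * d (sval a k) (sval b k) < w k * e.
  by rewrite [w k * e]mulrC; apply: lt_le_trans h1 h2.
by rewrite ltr_pM2l in h3.
Qed.

Lemma bnd_not_finer M : 0 <= M -> (forall x y, d x y <= M) ->
  forall A : set W, metric_open (wdist w d xs) A ->
  subspace_prod_open d (in_wspace w d xs) A.
Proof.
move=> M0 dM A HA.
exists (fun y => exists h : in_wspace w d xs y, A (exist _ y h)); split.
  move=> x [h Ax]; have [r [r0 Hr]] := HA _ Ax.
  have [N [e [B [e0 Br Hc]]]] := @cyl_lemma M M0 dM r r0.
  exists N, e; split => // y Hy; exists (@bnd_in M M0 dM y); apply: Hr.
  have H := wdist_le (exist _ x h) (exist _ y (@bnd_in M M0 dM y)) B (Hc _ _ Hy).
  exact: le_lt_trans H Br.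
apply/seteqP; split => -[x h] /=; first by exists h.
by move=> [h' Ah']; rewrite (Prop_irrelevance h h').
Qed.

Lemma sum_single (f : nat -> R) N n : (forall k, k != N -> f k = 0) ->
  \sum_(k < n) f k = if (N < n)%N then f N else 0.
Proof.
move=> Hf; elim: n => [|n IH]; first by rewrite big_ord0.
rewrite big_ord_recr /= IH ltnS.
case: (eqVneq n N) => [->|nN]; first by rewrite ltnn leqnn add0r.
by rewrite (Hf n nN) addr0 ltn_neqAle eq_sym nN.
Qed.

Lemma cst_in : in_wspace w d xs cst.
Proof.
apply: nondecreasing_is_cvgn; first exact: ps_nd.
by exists 0 => _ [n _ <-]; rewrite /ps big1 // => k _; rewrite dxx mulr0.
Qed.

Lemma unb_not_prod : unbounded d -> exists A : set W,
  metric_open (wdist w d xs) A /\ ~ subspace_prod_open d (in_wspace w d xs) A.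
Proof.
move=> Hu; pose c : W := exist _ cst cst_in.
exists [set a | wdist w d xs c a < 1]; split.
  move=> a /= ha; exists (1 - wdist w d xs c a); split; first by rewrite subr_gt0.
  move=> b hb; have := wdist_tri c a b; lra.
move=> [Op [HO HA]].
have Oc : Op cst.
  have : [set a | wdist w d xs c a < 1] c by rewrite /= wdist_self ltr01.
  by rewrite HA.
have [N [e [e0 HNe]]] := HO _ Oc.
set v := w N.
have v0 : 0 < v := wpos N.
have [u Hu1] : exists u, 1 < v * d u xs.
  have [p [q Hpq]] := Hu (2 / v).
  have H2 : 2 < v * d p q.
    have -> : 2 = v * (2 / v) by field; rewrite lt0r_neq0.
    by rewrite ltr_pM2l.
  have H3 : v * d p q <= v * d p xs + v * d q xs.
    rewrite -mulrDr; apply: ler_wpM2l; [exact: ltW | rewrite (dsym q xs); exact: dtri].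
  have [h|h] := ltrP 1 (v * d p xs); first by exists p.
  by exists q; lra.
pose y := fun k => if k == N then u else xs.
have hy : in_wspace w d xs y.
  apply: nondecreasing_is_cvgn; first exact: ps_nd.
  exists (v * d u xs) => _ [n _ <-].
  rewrite (sum_single (fun k => w k * d (y k) xs) N) => [|k kN]; last by rewrite /y (negbTE kN) dxx mulr0.
  by case: ifP => _; [rewrite /y eqxx | rewrite mulr_ge0 // ltW].
have : Op y.
  apply: HNe => k kN; by rewrite /y ltn_eqF // dxx.
rewrite -/(sval (exist _ y hy)) => Oy.
have : [set a | wdist w d xs c a < 1] (exist _ y hy) by rewrite HA.
move=> /=; apply/negP; rewrite -leNgt.
apply: le_trans (wdist_ge c _ N.+1).
apply: le_trans (term_le _ _ N); rewrite /y /cst /= eqxx dsym; exact: ltW.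
Qed.


Lemma posmin (h : nat -> R) N : (forall k, 0 < h k) ->
  exists m, 0 < m /\ forall k, (k < N)%N -> m <= h k.
Proof.
move=> hp; elim: N => [|N [m [m0 Hm]]]; first by exists 1.
exists (Num.min m (h N)); split; first by rewrite lt_min m0 hp.
move=> k; rewrite ltnS leq_eqVlt => /orP [/eqP ->|kN].
  by rewrite ge_min lexx orbT.
by rewrite ge_min Hm.
Qed.

Lemma finmin m (g : 'I_m -> R) : (forall j, 0 < g j) ->
  exists e, 0 < e /\ forall j, e <= g j.
Proof.
move=> gp.
pose h k := if @insub _ (fun k => (k < m)%N) 'I_m k is Some j then g j else 1.
have [e [e0 He]] := @posmin h m (fun k => ltac:(rewrite /h; case: insub => // j)).
exists e; split => // j; have := He _ (ltn_ord j); by rewrite /h valK.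
Qed.

Lemma single_le n (G : 'I_n -> R) j : (forall i, 0 <= G i) -> G j <= \sum_i G i.
Proof. by move=> F0; rewrite (bigD1 j) //= lerDl sumr_ge0. Qed.

Lemma cpt_bounded : opencover_compact (metric_open d) ->
  exists M, 0 <= M /\ forall x y, d x y <= M.
Proof.
move=> HT.
have Go : forall t, metric_open d [set u | d t u < 1].
  move=> t u hu; exists (1 - d t u); split; first by rewrite subr_gt0.
  move=> v hv /=; have := dtri t u v; rewrite /= in hu; lra.
have Gc : forall x, exists t, [set u | d t u < 1] x.
  by move=> x; exists x; rewrite /= dxx ltr01.
have [n [f Hf]] := HT T (fun t => [set u | d t u < 1]) Go Gc.
exists (\sum_(j < n) \sum_(j' < n) d (f j) (f j') + 2); split.
  by rewrite addr_ge0 // sumr_ge0 // => j _; rewrite sumr_ge0.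
move=> x y; have [jx hx] := Hf x; have [jy hy] := Hf y.
rewrite /= in hx hy.
have h1 : d (f jx) (f jy) <= \sum_(j < n) \sum_(j' < n) d (f j) (f j').
  apply: le_trans (@single_le n (fun j => \sum_(j' < n) d (f j) (f j')) jx _).
    exact: (@single_le n (fun j' => d (f jx) (f j'))).
  by move=> i; rewrite sumr_ge0.
have := dtri x (f jx) y; have := dtri (f jx) (f jy) y; have := dsym x (f jx).
lra.
Qed.


Lemma In_nth_ord (I : Type) (i0 i : I) (s : seq I) : List.In i s ->
  exists j : 'I_(size s), nth i0 s j = i.
Proof.
elim: s => [|a s IH] //= [->|/IH [j hj]]; first by exists ord0.
by exists (lift ord0 j).
Qed.

Lemma In_flatten (J : eqType) (I : Type) (s : J -> seq I) (l : seq J) j i :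
  j \in l -> List.In i (s j) -> List.In i (flatten (map s l)).
Proof.
elim: l => [|a l IH] //=; rewrite in_cons => /orP [/eqP <-|jl] hi.
  by apply: List.in_or_app; left.
by apply: List.in_or_app; right; apply: IH.
Qed.

Definition upd (x : nat -> T) N t := fun k => if k == N then t else x k.

Lemma W_compact M : 0 <= M -> (forall x y, d x y <= M) ->
  opencover_compact (metric_open d) ->
  opencover_compact (metric_open (wdist w d xs)).
Proof.
move=> M0 dM HT I F Fo Fcov.
pose cov (S : set W) := exists s : seq I,
  forall a, S a -> exists2 i, List.In i s & F i a.
have cov_mono : forall S S' : set W, (forall a, S a -> S' a) -> cov S' -> cov S.
  by move=> S S' hS [s hs]; exists s => a /hS /hs.
have cov_union : forall (J : finType) (S : J -> set W), (forall j, cov (S j)) ->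
    cov (fun a => exists j, S j a).
  move=> J S hS; have [s hs] := choice hS.
  exists (flatten (map s (enum J))) => a [j /(hs j) [i hi Fi]].
  by exists i => //; apply: (@In_flatten _ _ s _ j); rewrite ?mem_enum.
suff : cov setT.
  case=> s Hs; case: s Hs => [|i0 s'] Hs.
    have f0 : 'I_0 -> I by case=> m; rewrite ltn0.
    by exists 0%N, f0 => a; have [i []] := Hs a Logic.I.
  exists (size (i0 :: s')), (fun j => nth i0 (i0 :: s') j) => a.
  have [i hi Fi] := Hs a Logic.I; have [j hj] := @In_nth_ord _ i0 _ _ hi.
  by exists j; rewrite hj.
apply: contrapT => Hnc.
have [[a0 _]|nW] := pselect (exists a : W, True); last first.
  by apply: Hnc; exists [::] => a _; exfalso; apply: nW; exists a.
pose cyl (x : nat -> T) N e := [set a : W | forall k, (k < N)%N -> d (x k) (sval a k) < e].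
pose Q N x := forall e, 0 < e -> ~ cov (cyl x N e).
have Q0 : forall x, Q 0%N x.
  by move=> x e e0 hc; apply: Hnc; apply: cov_mono hc.
have step : forall N x, Q N x -> exists t, Q N.+1 (upd x N t).
  move=> N x HQ; apply: contrapT => Hno.
  have He : forall t, exists e, 0 < e /\ cov (cyl (upd x N t) N.+1 e).
    move=> t; apply: contrapT => h; apply: Hno; exists t => e e0 hc.
    by apply: h; exists e.
  have [E HE] := choice He.
  have Go : forall t, metric_open d [set u | d t u < E t].
    move=> t u hu; exists (E t - d t u); split; first by rewrite subr_gt0.
    move=> v hv /=; have := dtri t u v; rewrite /= in hu; lra.
  have Gc : forall x, exists t, [set u | d t u < E t] x.
    by move=> z; exists z; rewrite /= dxx; case: (HE z).
  have [m [f Hf]] := HT T (fun t => [set u | d t u < E t]) Go Gc.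
  have [e' [e'0 He']] := @finmin m (fun j => E (f j)) (fun j => proj1 (HE (f j))).
  apply: (HQ e' e'0).
  apply: (cov_mono _ (fun a => exists j, cyl (upd x N (f j)) N.+1 (E (f j)) a)).
    move=> a ha; have [j hj] := Hf (sval a N 
    ); exists j => k; rewrite ltnS leq_eqVlt => /orP [/eqP ->|kN].
      by rewrite /upd eqxx.
    rewrite /upd ltn_eqF //; apply: lt_le_trans (ha k kN) (He' j).
  by apply: cov_union => j; case: (HE (f j)).
have [g Hg] : {g : nat * (nat -> T) -> T & forall p, Q p.1 p.2 -> Q p.1.+1 (upd p.2 p.1 (g p))}.
  apply: (@choice _ _ (fun p t => Q p.1 p.2 -> Q p.1.+1 (upd p.2 p.1 t))) => -[N x] /=.
  have [hq|hq] := pselect (Q N x); first by have [t ht] := step N x hq; exists t.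
  by exists (sval a0 0%N).
pose X := fix X (n : nat) : nat -> T :=
  match n with 0%N => sval a0 | n.+1 => upd (X n) n (g (n, X n)) end.
have HX : forall n, Q n (X n).
  elim=> [|n IH]; first exact: Q0.
  exact: (Hg (n, X n)).
have stab : forall k j, X (k.+1 + j)%N k = X k.+1 k.
  move=> k; elim=> [|j IH]; first by rewrite addn0.
  by rewrite addnS /= /upd ltn_eqF ?IH // ltnS leq_addr.
pose x k := X k.+1 k.
have Qx : forall N, Q N x.
  move=> N e e0 hc; apply: (HX N e e0); apply: cov_mono hc => a ha k kN.
  by rewrite /x -(stab k (N - k.+1)%N) subnKC //; apply: ha.
have hx := @bnd_in M M0 dM x.
have [i Fi] := Fcov (exist _ x hx).
have [r [r0 Hr]] := Fo i _ Fi.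
have [N [e [B [e0 Br Hc]]]] := @cyl_lemma M M0 dM r r0.
apply: (Qx N e e0); exists [:: i] => a ha; exists i; first by left.
apply: Hr; apply: le_lt_trans Br.
exact: wdist_le (exist _ x hx) a B (Hc _ _ ha).
Qed.


Lemma main_sec :
  (strictly_finer (metric_open (wdist w d xs))
      (subspace_prod_open d (in_wspace w d xs))
    <-> unbounded d) /\
  (opencover_compact (metric_open d) ->
    opencover_compact (metric_open (wdist w d xs))).
Proof.
split.
  split.
    move=> [_ [A [HA HnA]]]; apply: contrapT => Hu.
    have [M HM] : exists M, forall x y, d x y <= M.
      apply: contrapT => h; apply: Hu => M; apply: contrapT => h2.
      apply: h; exists M => x y; rewrite leNgt; apply/negP => hlt.
      by apply: h2; exists x, y.
    apply: HnA; apply: (@bnd_not_finer (Num.max M 0)) => //.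
      by rewrite le_max lexx orbT.
    by move=> x y; rewrite le_max HM.
  by move=> Hu; split; [exact: finer | exact: unb_not_prod].
move=> HT; have [M [M0 HM]] := cpt_bounded HT; exact: W_compact M0 HM HT.
Qed.

End Aux.

Theorem lemmaB1 (R : realType) (T : Type) (d : T -> T -> R) (w : nat -> R)
  (xs : T) :
  polish d -> admissible_weights w ->
  (strictly_finer (metric_open (wdist w d xs))
      (subspace_prod_open d (in_wspace w d xs))
    <-> unbounded d) /\
  (opencover_compact (metric_open d) ->
    opencover_compact (metric_open (wdist w d xs))).
Proof.
move=> [[d0 d0iff dsym dtri] _ _] [wb _ wS _].
have dxx : forall x, d x x = 0 by move=> x; apply/d0iff.
have wpos : forall k, 0 < w k by move=> k; case/andP: (wb k).
exact: main_sec.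
Qed.
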